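(* Let $\mathscr A$ and $\mathscr B$ be Hopf algebras over a field $\mathbb F$ (with comultiplications $\Delta_{\mathscr A},\Delta_{\mathscr B}$, counits $\varepsilon_{\mathscr A},\varepsilon_{\mathscr B}$ and antipodes $\sigma_{\mathscr A},\sigma_{\mathscr B}$, where $\sigma_{\mathscr B}$ is invertible), and let $\psi:\mathscr A\times\mathscr B\to\mathbb F$ be a skew-Hopf pairing. Let $\mathscr A*\mathscr B$ be the free product of the $\mathbb F$-algebras $\mathscr A$ and $\mathscr B$, and let $\mathcal I$ be the two-sided ideal of $\mathscr A*\mathscr B$ generated by the elements $$h_{a,b}:=\sum (b_2*a_2)\,\psi(a_1,b_1)-\sum (a_1*b_1)\,\psi(a_2,b_2)\qquad(a\in\mathscr A,\ b\in\mathscr B),$$ where $\Delta_{\mathscr A}(a)=\sum a_1\otimes a_2$ and $\Delta_{\mathscr B}(b)=\sum b_1\otimes b_2$. Suppose $X_{\mathscr A}\subseteq\mathscr A$ and $X_{\mathscr B}\subseteq\mathscr B$ are generating sets (as algebras) of $\mathscr A$ and $\mathscr B$ such that $\Delta_{\mathscr A}(X_{\mathscr A})\subseteq \mathrm{span}_{\mathbb F}X_{\mathscr A}\otimes\mathrm{span}_{\mathbb F}X_{\mathscr A}$ and $\Delta_{\mathscr B}(X_{\mathscr B})\subseteq \mathrm{span}_{\mathbb F}X_{\mathscr B}\otimes\mathrm{span}_{\mathbb F}X_{\mathscr B}$. Then $\mathcal I$ is generated by the elements $h_{a,b}$ with $a\in X_{\mathscr A}$ and $b\in X_{\mathscr 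B}$.
   Context: A skew-Hopf pairing of $\mathscr A$ and $\mathscr B$ is an $\mathbb F$-bilinear form $\psi:\mathscr A\times\mathscr B\to\mathbb F$ such that: (HP1) $\psi(1,b)=\varepsilon_{\mathscr B}(b)$ and $\psi(a,1)=\varepsilon_{\mathscr A}(a)$; (HP2) $\psi(a,bb')=\psi(\Delta_{\mathscr A}(a),b\otimes b')$; (HP3) $\psi(aa',b)=\psi(a\otimes a',\Delta^{\rm op}_{\mathscr B}(b))$, where $\Delta^{\rm op}_{\mathscr B}(b)=\sum b_2\otimes b_1$; (HP4) $\psi(\sigma_{\mathscr A}(a),b)=\psi(a,\sigma_{\mathscr B}^{-1}(b))$; here $\psi(a\otimes a',b\otimes b')=\psi(a,b)\psi(a',b')$. The free product $\mathscr A*\mathscr B$ is the $\mathbb F$-algebra with identity spanned by words alternating between nonidentity basis elements of $\mathscr A$ and of $\mathscr B$, with multiplication by contracted juxtaposition (it is the coproduct of $\mathscr A$ and $\mathscr B$ in the category of unital $\mathbb F$-algebras). *)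

(* Defs.v *)
From HB Require Import structures.
From mathcomp Require Import all_boot all_order all_algebra.
Set Implicit Arguments. Unset Strict Implicit. Unset Printing Implicit Defensive.
Import GRing.Theory.
Local Open Scope ring_scope.

(* Over a field F, the tensor product A (x) A is modelled by
   finite formal sums  sum_i u_i (x) v_i  given as  s : seq (A * A); two such
   sums denote the same tensor iff every F-bilinear form takes the same value
   on them (over a field the bilinear forms separate the points of A (x) A).
   Likewise A (x) A (x) A is tested with trilinear forms.  A comultiplication
   is a function  Delta : A -> seq (A * A)  returning one representative
   sum_(a1,a2) a1 (x) a2 of Delta(a) (Sweedler notation). *)

Section HopfDefs.
Variable F : fieldType.

Definition bilinear_form (A B : lmodType F) (beta : A -> B -> F) : Prop :=
  (forall (c : F) (x y : A) (z : B), beta (c *: x + y) z = c * beta x z + beta y z) /\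
  (forall (c : F) (z : A) (x y : B), beta z (c *: x + y) = c * beta z x + beta z y).

Definition trilinear_form (A : lmodType F) (tau : A -> A -> A -> F) : Prop :=
  (forall (c : F) x y u v, tau (c *: x + y) u v = c * tau x u v + tau y u v) /\
  (forall (c : F) x y u v, tau u (c *: x + y) v = c * tau u x v + tau u y v) /\
  (forall (c : F) x y u v, tau u v (c *: x + y) = c * tau u v x + tau u v y).

Definition teval (A : lmodType F) (beta : A -> A -> F) (s : seq (A * A)) : F :=
  \sum_(p <- s) beta p.1 p.2.

Definition teq (A : lmodType F) (s t : seq (A * A)) : Prop :=
  forall beta : A -> A -> F, bilinear_form beta -> teval beta s = teval beta t.

Inductive span_of (A : lmodType F) (X : A -> Prop) : A -> Prop :=
| span0 : span_of X 0
| spanX x : X x -> span_of X x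
| spanD x y : span_of X x -> span_of X y -> span_of X (x + y)
| spanZ (c : F) x : span_of X x -> span_of X (c *: x).

Inductive gen_alg (A : algType F) (X : A -> Prop) : A -> Prop :=
| gen_X x : X x -> gen_alg X x
| gen_1 : gen_alg X 1
| gen_D x y : gen_alg X x -> gen_alg X y -> gen_alg X (x + y)
| gen_Z (c : F) x : gen_alg X x -> gen_alg X (c *: x)
| gen_M x y : gen_alg X x -> gen_alg X y -> gen_alg X (x * y).

Definition generates (A : algType F) (X : A -> Prop) : Prop :=
  forall a : A, gen_alg X a.

Definition coprod_in_span (A : algType F) (Delta : A -> seq (A * A))
  (X : A -> Prop) : Prop :=
  forall x, X x -> exists s : seq (A * A),
    (forall p, p \in s -> span_of X p.1 /\ span_of X p.2) /\ teq (Delta x) s.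

Definition alg_hom (A C : algType F) (f : A -> C) : Prop :=
  [/\ forall (c : F) (x y : A), f (c *: x + y) = c *: f x + f y,
      forall x y : A, f (x * y) = f x * f y & f 1 = 1].

Definition is_hopf (A : algType F) (Delta : A -> seq (A * A)) (eps : A -> F)
  (sigma : A -> A) : Prop :=
  [/\
      forall (c : F) (x y : A), teq (Delta (c *: x + y))
          ([seq (c *: p.1, p.2) | p <- Delta x] ++ Delta y),
      teq (Delta 1) [:: (1, 1)] /\
      forall x y : A, teq (Delta (x * y))
          [seq (p.1 * q.1, p.2 * q.2) | p <- Delta x, q <- Delta y],
      forall (tau : A -> A -> A -> F), trilinear_form tau -> forall a : A,
        \sum_(p <- Delta a) \sum_(q <- Delta p.1) tau q.1 q.2 p.2 =
        \sum_(p <- Delta a) \sum_(q <- Delta p.2) tau p.1 q.1 q.2,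
      alg_hom (eps : A -> F^o) /\
      (forall a : A, \sum_(p <- Delta a) eps p.1 *: p.2 = a /\
                     \sum_(p <- Delta a) eps p.2 *: p.1 = a) &
      (forall (c : F) (x y : A), sigma (c *: x + y) = c *: sigma x + sigma y) /\
      (forall a : A, \sum_(p <- Delta a) sigma p.1 * p.2 = eps a *: 1 /\
                     \sum_(p <- Delta a) p.1 * sigma p.2 = eps a *: 1)].

(* skew-Hopf pairing (HP1)-(HP4); sigmaBinv is the inverse of sigma_B *)
Definition skew_hopf_pairing (A B : algType F)
  (DA : A -> seq (A * A)) (epsA : A -> F) (sigmaA : A -> A)
  (DB : B -> seq (B * B)) (epsB : B -> F) (sigmaBinv : B -> B)
  (psi : A -> B -> F) : Prop :=
  [/\ bilinear_form psi,
      (forall b, psi 1 b = epsB b) /\ (forall a, psi a 1 = epsA a),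
      forall a b b', psi a (b * b') = \sum_(p <- DA a) psi p.1 b * psi p.2 b',
      forall a a' b, psi (a * a') b = \sum_(q <- DB b) psi a q.2 * psi a' q.1 &
      forall a b, psi (sigmaA a) b = psi a (sigmaBinv b)].

Definition is_free_product (A B P : algType F) (iA : A -> P) (iB : B -> P) : Prop :=
  alg_hom iA /\ alg_hom iB /\
  forall (C : algType F) (f : A -> C) (g : B -> C), alg_hom f -> alg_hom g ->
    exists h : P -> C, [/\ alg_hom h, forall a, h (iA a) = f a,
                           forall b, h (iB b) = g b &
      forall h' : P -> C, alg_hom h' -> (forall a, h' (iA a) = f a) ->
                          (forall b, h' (iB b) = g b) -> forall z, h' z = h z].

Definition hab (A B P : algType F) (iA : A -> P) (iB : B -> P)
  (DA : A -> seq (A * A)) (DB : B -> seq (B * B)) (psi : A -> B -> F)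
  (a : A) (b : B) : P :=
  \sum_(p <- DA a) \sum_(q <- DB b) psi p.1 q.1 *: (iB q.2 * iA p.2)
  - \sum_(p <- DA a) \sum_(q <- DB b) psi p.2 q.2 *: (iA p.1 * iB q.1).

Definition in_ideal_gen (P : algType F) (S : P -> Prop) (z : P) : Prop :=
  exists l : seq (P * P * P),
    (forall t, t \in l -> S t.1.2) /\ z = \sum_(t <- l) t.1.1 * t.1.2 * t.2.

End HopfDefs.

(* Main.v *)
Require Import Defs.
From HB Require Import structures.
From mathcomp Require Import all_boot all_order all_algebra.
From mathcomp Require Import boolp classical_sets.
Import GRing.Theory.
Local Open Scope ring_scope.

Module Helpers.
Set Implicit Arguments. Unset Strict Implicit.

Section SepS.
Local Open Scope classical_set_scope.
Local Open Scope ring_scope.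
Lemma separate (F : fieldType) (M : lmodType F) (w : M) : w != 0 ->
  exists f : M -> F, (forall c x y, f (c *: x + y) = c * f x + f y) /\ f w = 1.
Proof.
move=> w0.
pose PP := fun X : set M => [/\ (forall x y, X x -> X y -> X (x+y)),
   (forall (c : F) x, X x -> X (c*:x)) & ~ X w].
have [W [[WD WZ Ww] Wmax]] : exists A, PP A /\ forall B, (A `<` B)%classic -> ~ PP B.
  apply: Zorn_bigcup => FF FP Ftot; split.
  - move=> x y [X FX Xx] [Y FY Yy].
    have [XY|YX] := Ftot _ _ FX FY.
    + exists Y => //; case: (FP _ FY) => D _ _; apply: D => //; exact: XY.
    + exists X => //; case: (FP _ FX) => D _ _; apply: D => //; exact: YX.
  - move=> c x [X FX Xx]; exists X => //; case: (FP _ FX) => _ Z _; exact: Z.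
  - by move=> [X FX Xw]; case: (FP _ FX) => _ _; apply.
have W0 : W 0.
  apply: contrapT => nW0.
  apply: (Wmax (W `|` [set 0])).
    split; first by move=> x Wx; left.
    move=> /(_ 0) h; apply: nW0; apply: h; by right.
  split.
  - move=> x y [Wx|->] [Wy|->]; rewrite ?addr0 ?add0r; [|by left|by left|by right].
    by left; apply: (WD).
  - by move=> c x [Wx|->]; [left; apply: (WZ)|right; rewrite scaler0].
  - by move=> [//|/eqP]; rewrite (negbTE w0).
have ex v : exists c : F, W (v - c *: w).
  apply: contrapT => nex.
  have nWv : ~ W v by move=> Wv; apply: nex; exists 0; rewrite scale0r subr0.
  apply: (Wmax [set u + c *: v | u in W & c in setT]).
    split; first by move=> x Wx; exists x => //; exists 0 => //; rewrite scale0r addr0.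
    move=> /(_ v) h; apply: nWv; apply: h.
    by exists 0 => //; exists 1 => //; rewrite scale1r add0r.
  split.
  - move=> _ _ [x Wx [c _ <-]] [y Wy [d _ <-]]; exists (x + y); first exact: WD.
    by exists (c + d) => //; rewrite scalerDl addrACA.
  - move=> k _ [x Wx [c _ <-]]; exists (k *: x); first exact: WZ.
    by exists (k * c) => //; rewrite scalerDr scalerA.
  - move=> [u Wu [c _ e]].
    have [c0|cn0] := eqVneq c 0.
      by apply: Ww; rewrite -e c0 scale0r addr0.
    apply: nex; exists c^-1.
    have -> : v = c^-1 *: (w - u) by rewrite -e addrAC subrr add0r scalerA mulVf // scale1r.
    rewrite scalerBr addrAC subrr add0r -scaleNr; apply: (WZ) => //.
have uniq v c d : W (v - c *: w) -> W (v - d *: w) -> c = d.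
  move=> Wc Wd; apply: contrapT => /eqP; rewrite eq_sym -subr_eq0 => ne.
  apply: Ww.
  have : W ((d - c)^-1 *: ((v - c *: w) + (-1) *: (v - d *: w))) by apply: (WZ); apply: (WD) => //; apply: (WZ).
  congr W; rewrite scaleN1r opprB addrC addrA.
rewrite addrAC (addrAC v) subrr add0r [X in _ *: X]addrC -scalerBl scalerA (addrC (-c) d) mulVf // scale1r.
  done.
pose f u := projT1 (cid (ex u)).
have fP u : W (u - f u *: w) by rewrite /f; case: cid.
exists f; split.
  move=> c x y; apply: (uniq (c *: x + y)) => //.
  have := WD _ _ (WZ c _ (fP x)) (fP y).
  congr W; rewrite scalerDl scalerBr scalerA; rewrite addrACA -opprD //.
apply: (uniq w) => //; by rewrite scale1r subrr.
Qed.

End SepS.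

Section Gen.
Variable F : fieldType.

Definition linM (U V : lmodType F) (f : U -> V) := forall (c : F) x y, f (c*:x+y) = c*:f x + f y.
Definition linF (U : lmodType F) (f : U -> F) := forall (c : F) x y, f (c*:x+y) = c * f x + f y.

Section L.
Variables (U V : lmodType F) (f : U -> V) (hf : linM f).
Lemma linM0 : f 0 = 0.
Proof. by have := hf 1 0 0; rewrite !scale1r addr0 => /esym/eqP; rewrite -subr_eq0 addrK => /eqP. Qed.
Lemma linMD x y : f (x + y) = f x + f y.
Proof. by have := hf 1 x y; rewrite !scale1r. Qed.
Lemma linMZ c x : f (c *: x) = c *: f x.
Proof. by rewrite -[c *: x]addr0 hf linM0 addr0. Qed.
Lemma linMN x : f (- x) = - f x.
Proof. by rewrite -scaleN1r linMZ scaleN1r. Qed.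
Lemma linMB x y : f (x - y) = f x - f y.
Proof. by rewrite linMD linMN. Qed.
Lemma linM_sum I (r : seq I) (g : I -> U) : f (\sum_(i <- r) g i) = \sum_(i <- r) f (g i).
Proof. by elim: r => [|i r IH]; rewrite ?big_nil ?linM0 // !big_cons linMD IH. Qed.
End L.

Lemma linF_M (U : lmodType F) (f : U -> F) : linF f -> linM (f : U -> F^o).
Proof. by []. Qed.

Section LF.
Variables (U : lmodType F) (f : U -> F) (hf : linF f).
Lemma linF0 : f 0 = 0. Proof. exact: (linM0 (linF_M hf)). Qed.
Lemma linFD x y : f (x + y) = f x + f y. Proof. exact: (linMD (linF_M hf)). Qed.
Lemma linFZ c x : f (c *: x) = c * f x. Proof. exact: (linMZ (linF_M hf)). Qed.
Lemma linF_sum I (r : seq I) (g : I -> U) : f (\sum_(i <- r) g i) = \sum_(i <- r) f (g i).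
Proof. exact: (linM_sum (linF_M hf)). Qed.
End LF.

Definition bilM (U M : lmodType F) (G : U -> U -> M) :=
  (forall z, linM (G^~ z)) /\ (forall z, linM (G z)).
Definition trilM (U M : lmodType F) (G : U -> U -> U -> M) :=
  [/\ (forall y z, linM (fun x => G x y z)), (forall x z, linM (fun y => G x y z))
    & (forall x y, linM (G x y))].

Lemma teq_tr (U M : lmodType F) (G : U -> U -> M) s t : bilM G -> teq s t ->
  \sum_(p <- s) G p.1 p.2 = \sum_(p <- t) G p.1 p.2.
Proof.
move=> [G1 G2] st; apply: contrapT => /eqP ne.
have [f [fl f1]] : exists f : M -> F, linF f /\ f (\sum_(p <- s) G p.1 p.2 - \sum_(p <- t) G p.1 p.2) = 1.
  by apply: separate; rewrite subr_eq0.
have bf : bilinear_form (fun x y => f (G x y)).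
  by split=> c x y z; rewrite ?G1 ?G2 fl.
have := st _ bf; rewrite /teval -!(linF_sum fl) => e.
by move: f1; rewrite (linMB (linF_M fl)) /= e subrr => /eqP; rewrite eq_sym oner_eq0.
Qed.

Lemma coassoc_tr (U M : lmodType F) (D : U -> seq (U * U)) :
  (forall (tau : U -> U -> U -> F), trilinear_form tau -> forall a : U,
        \sum_(p <- D a) \sum_(q <- D p.1) tau q.1 q.2 p.2 =
        \sum_(p <- D a) \sum_(q <- D p.2) tau p.1 q.1 q.2) ->
  forall G : U -> U -> U -> M, trilM G -> forall a,
        \sum_(p <- D a) \sum_(q <- D p.1) G q.1 q.2 p.2 =
        \sum_(p <- D a) \sum_(q <- D p.2) G p.1 q.1 q.2.
Proof.
move=> co G [G1 G2 G3] a; apply: contrapT => /eqP ne.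
have [f [fl f1]] : exists f : M -> F, linF f /\ f (\sum_(p <- D a) \sum_(q <- D p.1) G q.1 q.2 p.2 -
        \sum_(p <- D a) \sum_(q <- D p.2) G p.1 q.1 q.2) = 1.
  by apply: separate; rewrite subr_eq0.
have bf : trilinear_form (fun x y z => f (G x y z)).
  split; [|split]=> c x y u v.
  - by have /= -> := G1 u v c x y; rewrite fl.
  - by have /= -> := G2 u v c x y; rewrite fl.
  - by have /= -> := G3 u v c x y; rewrite fl.
have := co _ bf a.
have fs (g : U * U -> seq (U * U)) (h : U * U -> U * U -> M) :
  f (\sum_(p <- D a) \sum_(q <- g p) h p q) = \sum_(p <- D a) \sum_(q <- g p) f (h p q).
  by rewrite (linF_sum fl); apply: eq_bigr => p _; rewrite (linF_sum fl).
rewrite -(fs (fun p => D p.1) (fun p q => G q.1 q.2 p.2)).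
rewrite -(fs (fun p => D p.2) (fun p q => G p.1 q.1 q.2)) => e.
by move: f1; rewrite (linMB (linF_M fl)) /= e subrr => /eqP; rewrite eq_sym oner_eq0.
Qed.
End Gen.

Section Comb.
Variable F : fieldType.
Implicit Types U V : lmodType F.

Lemma linM_sumf U V I (r : seq I) (G : I -> U -> V) :
  (forall i, linM (G i)) -> linM (fun x => \sum_(i <- r) G i x).
Proof.
move=> hG c x y; rewrite scaler_sumr -big_split; apply: eq_bigr => i _; exact: hG.
Qed.
Lemma linM_add U V (g h : U -> V) : linM g -> linM h -> linM (fun x => g x + h x).
Proof. by move=> hg hh c x y; rewrite hg hh scalerDr addrACA. Qed.
Lemma linM_sub U V (g h : U -> V) : linM g -> linM h -> linM (fun x => g x - h x).
Proof. by move=> hg hh c x y; rewrite hg hh scalerBr opprD addrACA. Qed.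
Lemma linM_scalF U V (f : U -> F) (m : V) : linF f -> linM (fun x => f x *: m).
Proof. by move=> hf c x y; rewrite hf scalerDl scalerA. Qed.
Lemma linM_scalc U V (c0 : F) (g : U -> V) : linM g -> linM (fun x => c0 *: g x).
Proof. by move=> hg c x y; rewrite hg scalerDr !scalerA mulrC. Qed.
Lemma linM_mull U (V : algType F) (m : V) (g : U -> V) : linM g -> linM (fun x => m * g x).
Proof. by move=> hg c x y; rewrite hg mulrDr scalerAr. Qed.
Lemma linM_mulr U (V : algType F) (m : V) (g : U -> V) : linM g -> linM (fun x => g x * m).
Proof. by move=> hg c x y; rewrite hg mulrDl scalerAl. Qed.
Lemma linF_mulc U (c0 : F) (f : U -> F) : linF f -> linF (fun x => c0 * f x).
Proof. by move=> hf c x y; rewrite hf mulrDr mulrCA. Qed.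
Lemma linF_mulcr U (c0 : F) (f : U -> F) : linF f -> linF (fun x => f x * c0).
Proof. by move=> hf c x y; rewrite hf mulrDl mulrA. Qed.
End Comb.

Lemma reorderA (V : nmodType) I1 I2 J K (s1 : seq I1) (s2 : seq I2) (t : seq J)
  (g : J -> seq K) (f : I1 -> I2 -> J -> K -> V) :
  \sum_(i <- s1) \sum_(i' <- s2) \sum_(j <- t) \sum_(k <- g j) f i i' j k =
  \sum_(j <- t) \sum_(k <- g j) \sum_(i <- s1) \sum_(i' <- s2) f i i' j k.
Proof.
under eq_bigr do (rewrite exchange_big; under eq_bigr do rewrite exchange_big).
rewrite exchange_big; apply: eq_bigr => j _; exact: exchange_big.
Qed.

Lemma reorderB (V : nmodType) I1 I2 J K (s1 : seq I1) (s2 : seq I2) (t : seq J)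
  (g : J -> seq K) (f : I1 -> I2 -> J -> K -> V) :
  \sum_(i' <- s2) \sum_(j <- t) \sum_(i <- s1) \sum_(k <- g j) f i i' j k =
  \sum_(j <- t) \sum_(k <- g j) \sum_(i <- s1) \sum_(i' <- s2) f i i' j k.
Proof.
rewrite exchange_big; apply: eq_bigr => j _.
under eq_bigr do rewrite exchange_big.
rewrite exchange_big; apply: eq_bigr => k _; exact: exchange_big.
Qed.

Section Ideal.
Variables (F : fieldType) (P : algType F) (S : P -> Prop).
Local Notation I := (in_ideal_gen S).
Lemma ideal0 : I 0. Proof. by exists [::]; rewrite big_nil. Qed.
Lemma idealD x y : I x -> I y -> I (x + y).
Proof.
move=> [l1 [h1 ->]] [l2 [h2 ->]]; exists (l1 ++ l2); rewrite big_cat; split=> //.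
by move=> t; rewrite mem_cat => /orP[/h1|/h2].
Qed.
Lemma idealZ c x : I x -> I (c *: x).
Proof.
move=> [l [h ->]]; exists [seq (c *: t.1.1, t.1.2, t.2) | t <- l]; split.
  by move=> t /mapP[u /h ? ->].
by rewrite big_map scaler_sumr; apply: eq_bigr => t _ /=; rewrite -!scalerAl.
Qed.
Lemma idealMl y x : I x -> I (y * x).
Proof.
move=> [l [h ->]]; exists [seq (y * t.1.1, t.1.2, t.2) | t <- l]; split.
  by move=> t /mapP[u /h ? ->].
by rewrite big_map mulr_sumr; apply: eq_bigr => t _ /=; rewrite !mulrA.
Qed.
Lemma idealMr y x : I x -> I (x * y).
Proof.
move=> [l [h ->]]; exists [seq (t.1.1, t.1.2, t.2 * y) | t <- l]; split.
  by move=> t /mapP[u /h ? ->].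
by rewrite big_map mulr_suml; apply: eq_bigr => t _ /=; rewrite !mulrA.
Qed.
Lemma idealS g : S g -> I g.
Proof. by move=> Sg; exists [:: (1, g, 1)]; rewrite big_seq1 mul1r mulr1; split=> // t; rewrite inE => /eqP ->. Qed.
Lemma ideal_sum (J : eqType) (r : seq J) (f : J -> P) : (forall j, j \in r -> I (f j)) -> I (\sum_(j <- r) f j).
Proof.
elim: r => [|j r IH] h; first by rewrite big_nil; exact: ideal0.
rewrite big_cons; apply: idealD; first by apply: h; rewrite inE eqxx.
by apply: IH => k kr; apply: h; rewrite inE kr orbT.
Qed.
End Ideal.

Lemma reorderC (V : nmodType) I1 I2 J K (s1 : seq I1) (s2 : seq I2) (t : seq J)
  (g : J -> seq K) (f : I1 -> I2 -> J -> K -> V) :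
  \sum_(i <- s1) \sum_(j <- t) \sum_(i' <- s2) \sum_(k <- g j) f i i' j k =
  \sum_(j <- t) \sum_(k <- g j) \sum_(i <- s1) \sum_(i' <- s2) f i i' j k.
Proof.
under eq_bigr do under eq_bigr do rewrite exchange_big.
rewrite exchange_big; apply: eq_bigr => j _; exact: exchange_big.
Qed.

Lemma reorderD (V : nmodType) I1 I2 K (s1 : seq I1) (s2 : seq I2) (g : seq K)
  (f : I1 -> I2 -> K -> V) :
  \sum_(i <- s1) \sum_(i' <- s2) \sum_(k <- g) f i i' k =
  \sum_(k <- g) \sum_(i <- s1) \sum_(i' <- s2) f i i' k.
Proof. under eq_bigr do rewrite exchange_big; exact: exchange_big. Qed.
Lemma reorderE (V : nmodType) I1 I2 K (s1 : seq I1) (s2 : seq I2) (g : seq K)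
  (f : I1 -> I2 -> K -> V) :
  \sum_(i <- s1) \sum_(k <- g) \sum_(i' <- s2) f i i' k =
  \sum_(k <- g) \sum_(i <- s1) \sum_(i' <- s2) f i i' k.
Proof. exact: exchange_big. Qed.
Lemma reorderF (V : nmodType) I1 I2 K (s1 : seq I1) (s2 : seq I2) (g : seq K)
  (f : I1 -> I2 -> K -> V) :
  \sum_(i' <- s2) \sum_(k <- g) \sum_(i <- s1) f i i' k =
  \sum_(k <- g) \sum_(i <- s1) \sum_(i' <- s2) f i i' k.
Proof.
rewrite exchange_big; apply: eq_bigr => k _; exact: exchange_big.
Qed.

Section Main.
Variables (F : fieldType) (A B P : algType F).
Variables (DA : A -> seq (A * A)) (epsA : A -> F) (DB : B -> seq (B * B)) (epsB : B -> F).
Variables (psi : A -> B -> F) (iA : A -> P) (iB : B -> P).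
Hypothesis DAlin : forall (c : F) (x y : A), teq (DA (c *: x + y))
          ([seq (c *: p.1, p.2) | p <- DA x] ++ DA y).
Hypothesis DA1 : teq (DA 1) [:: (1, 1)].
Hypothesis DAmul : forall x y : A, teq (DA (x * y))
          [seq (p.1 * q.1, p.2 * q.2) | p <- DA x, q <- DA y].
Hypothesis DAco : forall (tau : A -> A -> A -> F), trilinear_form tau -> forall a : A,
        \sum_(p <- DA a) \sum_(q <- DA p.1) tau q.1 q.2 p.2 =
        \sum_(p <- DA a) \sum_(q <- DA p.2) tau p.1 q.1 q.2.
Hypothesis epsAc : forall a : A, \sum_(p <- DA a) epsA p.1 *: p.2 = a /\
                     \sum_(p <- DA a) epsA p.2 *: p.1 = a.
Hypothesis DBlin : forall (c : F) (x y : B), teq (DB (c *: x + y))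
          ([seq (c *: p.1, p.2) | p <- DB x] ++ DB y).
Hypothesis DB1 : teq (DB 1) [:: (1, 1)].
Hypothesis DBmul : forall x y : B, teq (DB (x * y))
          [seq (p.1 * q.1, p.2 * q.2) | p <- DB x, q <- DB y].
Hypothesis DBco : forall (tau : B -> B -> B -> F), trilinear_form tau -> forall a : B,
        \sum_(p <- DB a) \sum_(q <- DB p.1) tau q.1 q.2 p.2 =
        \sum_(p <- DB a) \sum_(q <- DB p.2) tau p.1 q.1 q.2.
Hypothesis epsBc : forall a : B, \sum_(p <- DB a) epsB p.1 *: p.2 = a /\
                     \sum_(p <- DB a) epsB p.2 *: p.1 = a.
Hypothesis psiL : forall (c : F) (x y : A) (z : B), psi (c *: x + y) z = c * psi x z + psi y z.
Hypothesis psiR : forall (c : F) (z : A) (x y : B), psi z (c *: x + y) = c * psi z x + psi z y.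
Hypothesis psi1b : forall b, psi 1 b = epsB b.
Hypothesis psia1 : forall a, psi a 1 = epsA a.
Hypothesis HP2 : forall a b b', psi a (b * b') = \sum_(p <- DA a) psi p.1 b * psi p.2 b'.
Hypothesis HP3 : forall a a' b, psi (a * a') b = \sum_(q <- DB b) psi a q.2 * psi a' q.1.
Hypothesis iAl : linM iA.
Hypothesis iAm : forall x y, iA (x * y) = iA x * iA y.
Hypothesis iA1 : iA 1 = 1.
Hypothesis iBl : linM iB.
Hypothesis iBm : forall x y, iB (x * y) = iB x * iB y.
Hypothesis iB1 : iB 1 = 1.

Notation H := (hab iA iB DA DB psi).

Definition Rr s t := \sum_(p <- s) \sum_(q <- t) psi p.1 q.1 *: (iB q.2 * iA p.2).
Definition Ll s t := \sum_(p <- s) \sum_(q <- t) psi p.2 q.2 *: (iA p.1 * iB q.1).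

Lemma habE a b : H a b = Rr (DA a) (DB b) - Ll (DA a) (DB b).
Proof. by []. Qed.

Lemma psiLl z : linF (psi^~ z). Proof. by move=> c x y; apply: psiL. Qed.
Lemma psiRl z : linF (psi z). Proof. by move=> c x y; apply: psiR. Qed.

Lemma Rr_trA s s' t : teq s s' -> Rr s t = Rr s' t.
Proof.
apply: (teq_tr (G := fun u v => \sum_(q <- t) psi u q.1 *: (iB q.2 * iA v))).
split=> z; apply: linM_sumf => q.
  exact: linM_scalF (psiLl _).
exact: linM_scalc (linM_mull _ iAl).
Qed.

Lemma Ll_trA s s' t : teq s s' -> Ll s t = Ll s' t.
Proof.
apply: (teq_tr (G := fun u v => \sum_(q <- t) psi v q.2 *: (iA u * iB q.1))).
split=> z; apply: linM_sumf => q.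
  exact: linM_scalc (linM_mulr _ iAl).
exact: linM_scalF (psiLl _).
Qed.

Lemma Rr_trB s t t' : teq t t' -> Rr s t = Rr s t'.
Proof.
move=> e; rewrite /Rr exchange_big [RHS]exchange_big /=.
apply: (teq_tr (G := fun x y => \sum_(p <- s) psi p.1 x *: (iB y * iA p.2))) e.
split=> z; apply: linM_sumf => p.
  exact: linM_scalF (psiRl _).
exact: linM_scalc (linM_mulr _ iBl).
Qed.

Lemma Ll_trB s t t' : teq t t' -> Ll s t = Ll s t'.
Proof.
move=> e; rewrite /Ll exchange_big [RHS]exchange_big /=.
apply: (teq_tr (G := fun x y => \sum_(p <- s) psi p.2 y *: (iA p.1 * iB x))) e.
split=> z; apply: linM_sumf => p.
  exact: linM_scalc (linM_mull _ iBl).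
exact: linM_scalF (psiRl _).
Qed.


Lemma Rr_catA s1 s2 t : Rr (s1 ++ s2) t = Rr s1 t + Rr s2 t.
Proof. by rewrite /Rr big_cat. Qed.
Lemma Ll_catA s1 s2 t : Ll (s1 ++ s2) t = Ll s1 t + Ll s2 t.
Proof. by rewrite /Ll big_cat. Qed.
Lemma Rr_catB s t1 t2 : Rr s (t1 ++ t2) = Rr s t1 + Rr s t2.
Proof. by rewrite /Rr -big_split; apply: eq_bigr => p _; rewrite big_cat. Qed.
Lemma Ll_catB s t1 t2 : Ll s (t1 ++ t2) = Ll s t1 + Ll s t2.
Proof. by rewrite /Ll -big_split; apply: eq_bigr => p _; rewrite big_cat. Qed.

Lemma Rr_mapA c s t : Rr [seq (c *: p.1, p.2) | p <- s] t = c *: Rr s t.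
Proof.
rewrite /Rr big_map scaler_sumr; apply: eq_bigr => p _; rewrite scaler_sumr.
by apply: eq_bigr => q _; rewrite (linFZ (psiLl _)) scalerA.
Qed.
Lemma Ll_mapA c s t : Ll [seq (c *: p.1, p.2) | p <- s] t = c *: Ll s t.
Proof.
rewrite /Ll big_map scaler_sumr; apply: eq_bigr => p _; rewrite scaler_sumr.
by apply: eq_bigr => q _ /=; rewrite (linMZ iAl) -scalerAl !scalerA mulrC.
Qed.
Lemma Rr_mapB c s t : Rr s [seq (c *: q.1, q.2) | q <- t] = c *: Rr s t.
Proof.
rewrite /Rr scaler_sumr; apply: eq_bigr => p _; rewrite big_map scaler_sumr.
by apply: eq_bigr => q _; rewrite (linFZ (psiRl _)) scalerA.
Qed.
Lemma Ll_mapB c s t : Ll s [seq (c *: q.1, q.2) | q <- t] = c *: Ll s t.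
Proof.
rewrite /Ll scaler_sumr; apply: eq_bigr => p _; rewrite big_map scaler_sumr.
by apply: eq_bigr => q _ /=; rewrite (linMZ iBl) -scalerAr !scalerA mulrC.
Qed.

Lemma H_linA c x y b : H (c *: x + y) b = c *: H x b + H y b.
Proof.
rewrite !habE (Rr_trA _ (DAlin c x y)) (Ll_trA _ (DAlin c x y)).
by rewrite Rr_catA Ll_catA Rr_mapA Ll_mapA scalerBr opprD addrACA.
Qed.
Lemma H_linB c x y a : H a (c *: x + y) = c *: H a x + H a y.
Proof.
rewrite !habE (Rr_trB _ (DBlin c x y)) (Ll_trB _ (DBlin c x y)).
by rewrite Rr_catB Ll_catB Rr_mapB Ll_mapB scalerBr opprD addrACA.
Qed.

Lemma H_1b b : H 1 b = 0.
Proof.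
rewrite habE (Rr_trA _ DA1) (Ll_trA _ DA1) /Rr /Ll !big_seq1 /=.
have e1 : \sum_(q <- DB b) psi 1 q.1 *: (iB q.2 * iA 1) = iB b.
  rewrite -[in RHS](proj1 (epsBc b)) (linM_sum iBl); apply: eq_bigr => q _.
  by rewrite iA1 mulr1 psi1b (linMZ iBl).
have e2 : \sum_(q <- DB b) psi 1 q.2 *: (iA 1 * iB q.1) = iB b.
  rewrite -[in RHS](proj2 (epsBc b)) (linM_sum iBl); apply: eq_bigr => q _.
  by rewrite iA1 mul1r psi1b (linMZ iBl).
by rewrite e1 e2 subrr.
Qed.

Lemma H_a1 a : H a 1 = 0.
Proof.
rewrite habE (Rr_trB _ DB1) (Ll_trB _ DB1) /Rr /Ll.
under eq_bigr do rewrite big_seq1 /=.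
under [X in _ - X]eq_bigr do rewrite big_seq1 /=.
have e1 : \sum_(p <- DA a) psi p.1 1 *: (iB 1 * iA p.2) = iA a.
  rewrite -[in RHS](proj1 (epsAc a)) (linM_sum iAl); apply: eq_bigr => q _.
  by rewrite iB1 mul1r psia1 (linMZ iAl).
have e2 : \sum_(p <- DA a) psi p.2 1 *: (iA p.1 * iB 1) = iA a.
  rewrite -[in RHS](proj2 (epsAc a)) (linM_sum iAl); apply: eq_bigr => q _.
  by rewrite iB1 mulr1 psia1 (linMZ iAl).
by rewrite e1 e2 subrr.
Qed.


Lemma Y1X1 a a' b : Rr (DA (a * a')) (DB b) =
  \sum_(p' <- DA a') \sum_(r <- DB b) psi p'.1 r.1 *: (Rr (DA a) (DB r.2) * iA p'.2).
Proof.
rewrite (Rr_trA _ (DAmul a a')) {1}/Rr big_allpairs_dep /=.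
pose G := fun (x y z : B) => \sum_(p <- DA a) \sum_(p' <- DA a')
   (psi p.1 y * psi p'.1 x) *: (iB z * iA p.2 * iA p'.2).
have hG : trilM G.
  split=> *; apply: linM_sumf => p; apply: linM_sumf => p'.
  - exact: linM_scalF (linF_mulc _ (psiRl _)).
  - exact: linM_scalF (linF_mulcr _ (psiRl _)).
  - exact: linM_scalc (linM_mulr _ (linM_mulr _ iBl)).
have E := coassoc_tr DBco hG b; rewrite /G in E.
transitivity (\sum_(r <- DB b) \sum_(q <- DB r.1) \sum_(p <- DA a) \sum_(p' <- DA a')
   (psi p.1 q.2 * psi p'.1 q.1) *: (iB r.2 * iA p.2 * iA p'.2)).
  rewrite -reorderA; apply: eq_bigr => p _; apply: eq_bigr => p' _; apply: eq_bigr => r _ /=.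
  by rewrite HP3 scaler_suml iAm mulrA.
rewrite E; symmetry.
transitivity (\sum_(p' <- DA a') \sum_(r <- DB b) \sum_(p <- DA a) \sum_(q <- DB r.2)
   (psi p.1 q.1 * psi p'.1 r.1) *: (iB q.2 * iA p.2 * iA p'.2)).
  apply: eq_bigr => p' _; apply: eq_bigr => r _.
  rewrite /Rr mulr_suml scaler_sumr; apply: eq_bigr => p _.
  rewrite mulr_suml scaler_sumr; apply: eq_bigr => q _.
  by rewrite -scalerAl scalerA mulrC.
by rewrite reorderB.
Qed.


Lemma Y2X4 a a' b : Ll (DA (a * a')) (DB b) =
  \sum_(p <- DA a) \sum_(r <- DB b) psi p.2 r.2 *: (iA p.1 * Ll (DA a') (DB r.1)).
Proof.
rewrite (Ll_trA _ (DAmul a a')) {1}/Ll big_allpairs_dep /=.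
pose G := fun (x y z : B) => \sum_(p <- DA a) \sum_(p' <- DA a')
   (psi p.2 z * psi p'.2 y) *: (iA p.1 * iA p'.1 * iB x).
have hG : trilM G.
  split=> *; apply: linM_sumf => p; apply: linM_sumf => p'.
  - exact: linM_scalc (linM_mull _ iBl).
  - exact: linM_scalF (linF_mulc _ (psiRl _)).
  - exact: linM_scalF (linF_mulcr _ (psiRl _)).
have E := coassoc_tr DBco hG b; rewrite /G in E.
transitivity (\sum_(r <- DB b) \sum_(q <- DB r.2) \sum_(p <- DA a) \sum_(p' <- DA a')
   (psi p.2 q.2 * psi p'.2 q.1) *: (iA p.1 * iA p'.1 * iB r.1)).
  rewrite -reorderA; apply: eq_bigr => p _; apply: eq_bigr => p' _; apply: eq_bigr => r _ /=.
  by rewrite HP3 scaler_suml iAm.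
rewrite -E; symmetry.
transitivity (\sum_(p <- DA a) \sum_(r <- DB b) \sum_(p' <- DA a') \sum_(q <- DB r.1)
   (psi p.2 r.2 * psi p'.2 q.2) *: (iA p.1 * iA p'.1 * iB q.1)).
  apply: eq_bigr => p _; apply: eq_bigr => r _.
  rewrite /Ll mulr_sumr scaler_sumr; apply: eq_bigr => p' _.
  rewrite mulr_sumr scaler_sumr; apply: eq_bigr => q _.
  by rewrite -scalerAr scalerA mulrA.
by rewrite reorderC.
Qed.

Lemma X2X3 a a' b :
  \sum_(p' <- DA a') \sum_(r <- DB b) psi p'.1 r.1 *: (Ll (DA a) (DB r.2) * iA p'.2) =
  \sum_(p <- DA a) \sum_(r <- DB b) psi p.2 r.2 *: (iA p.1 * Rr (DA a') (DB r.1)).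
Proof.
pose G := fun (x y z : B) => \sum_(p <- DA a) \sum_(p' <- DA a')
   (psi p'.1 x * psi p.2 z) *: (iA p.1 * iB y * iA p'.2).
have hG : trilM G.
  split=> *; apply: linM_sumf => p; apply: linM_sumf => p'.
  - exact: linM_scalF (linF_mulcr _ (psiRl _)).
  - exact: linM_scalc (linM_mulr _ (linM_mull _ iBl)).
  - exact: linM_scalF (linF_mulc _ (psiRl _)).
have E := coassoc_tr DBco hG b; rewrite /G in E.
transitivity (\sum_(p' <- DA a') \sum_(r <- DB b) \sum_(p <- DA a) \sum_(q <- DB r.2)
   (psi p'.1 r.1 * psi p.2 q.2) *: (iA p.1 * iB q.1 * iA p'.2)).
  apply: eq_bigr => p' _; apply: eq_bigr => r _.
  rewrite /Ll mulr_suml scaler_sumr; apply: eq_bigr => p _.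
  rewrite mulr_suml scaler_sumr; apply: eq_bigr => q _.
  by rewrite -scalerAl scalerA.
rewrite reorderB -E; symmetry.
transitivity (\sum_(p <- DA a) \sum_(r <- DB b) \sum_(p' <- DA a') \sum_(q <- DB r.1)
   (psi p'.1 q.1 * psi p.2 r.2) *: (iA p.1 * iB q.2 * iA p'.2)).
  apply: eq_bigr => p _; apply: eq_bigr => r _.
  rewrite /Rr mulr_sumr scaler_sumr; apply: eq_bigr => p' _.
  rewrite mulr_sumr scaler_sumr; apply: eq_bigr => q _.
  by rewrite -scalerAr scalerA mulrA mulrC.
by rewrite reorderC.
Qed.

Lemma H_mulA a a' b : H (a * a') b =
  \sum_(p' <- DA a') \sum_(r <- DB b) psi p'.1 r.1 *: (H a r.2 * iA p'.2)
  + \sum_(p <- DA a) \sum_(r <- DB b) psi p.2 r.2 *: (iA p.1 * H a' r.1).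
Proof.
have e1 : \sum_(p' <- DA a') \sum_(r <- DB b) psi p'.1 r.1 *: (H a r.2 * iA p'.2) =
  \sum_(p' <- DA a') \sum_(r <- DB b) psi p'.1 r.1 *: (Rr (DA a) (DB r.2) * iA p'.2) -
  \sum_(p' <- DA a') \sum_(r <- DB b) psi p'.1 r.1 *: (Ll (DA a) (DB r.2) * iA p'.2).
  rewrite -sumrB; apply: eq_bigr => p' _; rewrite -sumrB; apply: eq_bigr => r _.
  by rewrite habE mulrBl scalerBr.
have e2 : \sum_(p <- DA a) \sum_(r <- DB b) psi p.2 r.2 *: (iA p.1 * H a' r.1) =
  \sum_(p <- DA a) \sum_(r <- DB b) psi p.2 r.2 *: (iA p.1 * Rr (DA a') (DB r.1)) -
  \sum_(p <- DA a) \sum_(r <- DB b) psi p.2 r.2 *: (iA p.1 * Ll (DA a') (DB r.1)).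
  rewrite -sumrB; apply: eq_bigr => p _; rewrite -sumrB; apply: eq_bigr => r _.
  by rewrite habE mulrBr scalerBr.
by rewrite e1 e2 habE Y1X1 Y2X4 X2X3 addrA subrK.
Qed.


Lemma Y1X1b a b b' : Rr (DA a) (DB (b * b')) =
  \sum_(p <- DA a) \sum_(q <- DB b) psi p.1 q.1 *: (iB q.2 * Rr (DA p.2) (DB b')).
Proof.
rewrite (Rr_trB _ (DBmul b b')) {1}/Rr.
under eq_bigr do rewrite big_allpairs_dep /=.
pose G := fun (x y z : A) => \sum_(q <- DB b) \sum_(q' <- DB b')
   (psi x q.1 * psi y q'.1) *: (iB q.2 * iB q'.2 * iA z).
have hG : trilM G.
  split=> *; apply: linM_sumf => q; apply: linM_sumf => q'.
  - exact: linM_scalF (linF_mulcr _ (psiLl _)).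
  - exact: linM_scalF (linF_mulc _ (psiLl _)).
  - exact: linM_scalc (linM_mull _ iAl).
have E := coassoc_tr DAco hG a; rewrite /G in E.
transitivity (\sum_(p <- DA a) \sum_(u <- DA p.1) \sum_(q <- DB b) \sum_(q' <- DB b')
   (psi u.1 q.1 * psi u.2 q'.1) *: (iB q.2 * iB q'.2 * iA p.2)).
  apply: eq_bigr => p _; rewrite -reorderD; apply: eq_bigr => q _; apply: eq_bigr => q' _ /=.
  by rewrite HP2 scaler_suml iBm.
rewrite E; apply: eq_bigr => p _.
transitivity (\sum_(q <- DB b) \sum_(u <- DA p.2) \sum_(q' <- DB b')
   (psi p.1 q.1 * psi u.1 q'.1) *: (iB q.2 * iB q'.2 * iA u.2)); last first.
  apply: eq_bigr => q _; rewrite /Rr mulr_sumr scaler_sumr; apply: eq_bigr => u _.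
  rewrite mulr_sumr scaler_sumr; apply: eq_bigr => q' _.
  by rewrite -scalerAr scalerA mulrA.
by rewrite reorderE.
Qed.

Lemma Y2X4b a b b' : Ll (DA a) (DB (b * b')) =
  \sum_(p <- DA a) \sum_(q' <- DB b') psi p.2 q'.2 *: (Ll (DA p.1) (DB b) * iB q'.1).
Proof.
rewrite (Ll_trB _ (DBmul b b')) {1}/Ll.
under eq_bigr do rewrite big_allpairs_dep /=.
pose G := fun (x y z : A) => \sum_(q <- DB b) \sum_(q' <- DB b')
   (psi y q.2 * psi z q'.2) *: (iA x * iB q.1 * iB q'.1).
have hG : trilM G.
  split=> *; apply: linM_sumf => q; apply: linM_sumf => q'.
  - exact: linM_scalc (linM_mulr _ (linM_mulr _ iAl)).
  - exact: linM_scalF (linF_mulcr _ (psiLl _)).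
  - exact: linM_scalF (linF_mulc _ (psiLl _)).
have E := coassoc_tr DAco hG a; rewrite /G in E.
transitivity (\sum_(p <- DA a) \sum_(u <- DA p.2) \sum_(q <- DB b) \sum_(q' <- DB b')
   (psi u.1 q.2 * psi u.2 q'.2) *: (iA p.1 * iB q.1 * iB q'.1)).
  apply: eq_bigr => p _; rewrite -reorderD; apply: eq_bigr => q _; apply: eq_bigr => q' _ /=.
  by rewrite HP2 scaler_suml iBm mulrA.
rewrite -E; apply: eq_bigr => p _.
transitivity (\sum_(q' <- DB b') \sum_(u <- DA p.1) \sum_(q <- DB b)
   (psi u.2 q.2 * psi p.2 q'.2) *: (iA u.1 * iB q.1 * iB q'.1)); last first.
  apply: eq_bigr => q' _; rewrite /Ll mulr_suml scaler_sumr; apply: eq_bigr => u _.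
  rewrite mulr_suml scaler_sumr; apply: eq_bigr => q _.
  by rewrite -scalerAl scalerA mulrC.
by rewrite [RHS]reorderF.
Qed.

Lemma X2X3b a b b' :
  \sum_(p <- DA a) \sum_(q <- DB b) psi p.1 q.1 *: (iB q.2 * Ll (DA p.2) (DB b')) =
  \sum_(p <- DA a) \sum_(q' <- DB b') psi p.2 q'.2 *: (Rr (DA p.1) (DB b) * iB q'.1).
Proof.
pose G := fun (x y z : A) => \sum_(q <- DB b) \sum_(q' <- DB b')
   (psi x q.1 * psi z q'.2) *: (iB q.2 * iA y * iB q'.1).
have hG : trilM G.
  split=> *; apply: linM_sumf => q; apply: linM_sumf => q'.
  - exact: linM_scalF (linF_mulcr _ (psiLl _)).
  - exact: linM_scalc (linM_mulr _ (linM_mull _ iAl)).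
  - exact: linM_scalF (linF_mulc _ (psiLl _)).
have E := coassoc_tr DAco hG a; rewrite /G in E.
transitivity (\sum_(p <- DA a) \sum_(u <- DA p.2) \sum_(q <- DB b) \sum_(q' <- DB b')
   (psi p.1 q.1 * psi u.2 q'.2) *: (iB q.2 * iA u.1 * iB q'.1)).
  apply: eq_bigr => p _; rewrite -reorderE; apply: eq_bigr => q _.
  rewrite /Ll mulr_sumr scaler_sumr; apply: eq_bigr => u _.
  rewrite mulr_sumr scaler_sumr; apply: eq_bigr => q' _.
  by rewrite -scalerAr scalerA !mulrA.
rewrite -E; apply: eq_bigr => p _.
transitivity (\sum_(q' <- DB b') \sum_(u <- DA p.1) \sum_(q <- DB b)
   (psi u.1 q.1 * psi p.2 q'.2) *: (iB q.2 * iA u.2 * iB q'.1)); last first.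
  apply: eq_bigr => q' _; rewrite /Rr mulr_suml scaler_sumr; apply: eq_bigr => u _.
  rewrite mulr_suml scaler_sumr; apply: eq_bigr => q _.
  by rewrite -scalerAl scalerA mulrC.
by rewrite [RHS]reorderF.
Qed.

Lemma H_mulB a b b' : H a (b * b') =
  \sum_(p <- DA a) \sum_(q <- DB b) psi p.1 q.1 *: (iB q.2 * H p.2 b')
  + \sum_(p <- DA a) \sum_(q' <- DB b') psi p.2 q'.2 *: (H p.1 b * iB q'.1).
Proof.
have e1 : \sum_(p <- DA a) \sum_(q <- DB b) psi p.1 q.1 *: (iB q.2 * H p.2 b') =
  \sum_(p <- DA a) \sum_(q <- DB b) psi p.1 q.1 *: (iB q.2 * Rr (DA p.2) (DB b')) -
  \sum_(p <- DA a) \sum_(q <- DB b) psi p.1 q.1 *: (iB q.2 * Ll (DA p.2) (DB b')).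
  rewrite -sumrB; apply: eq_bigr => p _; rewrite -sumrB; apply: eq_bigr => q _.
  by rewrite habE mulrBr scalerBr.
have e2 : \sum_(p <- DA a) \sum_(q' <- DB b') psi p.2 q'.2 *: (H p.1 b * iB q'.1) =
  \sum_(p <- DA a) \sum_(q' <- DB b') psi p.2 q'.2 *: (Rr (DA p.1) (DB b) * iB q'.1) -
  \sum_(p <- DA a) \sum_(q' <- DB b') psi p.2 q'.2 *: (Ll (DA p.1) (DB b) * iB q'.1).
  rewrite -sumrB; apply: eq_bigr => p _; rewrite -sumrB; apply: eq_bigr => q _.
  by rewrite habE mulrBl scalerBr.
by rewrite e1 e2 habE Y1X1b Y2X4b X2X3b addrA subrK.
Qed.


Lemma H_0b b : H 0 b = 0.
Proof.
have := H_linA 1 0 0 b; rewrite !scale1r addr0 => /esym/eqP.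
by rewrite -subr_eq0 addrK => /eqP.
Qed.
Lemma H_a0 a : H a 0 = 0.
Proof.
have := H_linB 1 0 0 a; rewrite !scale1r addr0 => /esym/eqP.
by rewrite -subr_eq0 addrK => /eqP.
Qed.
Lemma H_DA x y b : H (x + y) b = H x b + H y b.
Proof. by have := H_linA 1 x y b; rewrite !scale1r. Qed.
Lemma H_ZA c x b : H (c *: x) b = c *: H x b.
Proof. by have := H_linA c x 0 b; rewrite addr0 H_0b addr0. Qed.
Lemma H_DB x y a : H a (x + y) = H a x + H a y.
Proof. by have := H_linB 1 x y a; rewrite !scale1r. Qed.
Lemma H_ZB c x a : H a (c *: x) = c *: H a x.
Proof. by have := H_linB c x 0 a; rewrite addr0 H_a0 addr0. Qed.

Lemma teval_cat (beta : A -> A -> F) s t : teval beta (s ++ t) = teval beta s + teval beta t.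
Proof. by rewrite /teval big_cat. Qed.
Lemma teval_map (beta : A -> A -> F) c s : bilinear_form beta ->
  teval beta [seq (c *: p.1, p.2) | p <- s] = c * teval beta s.
Proof.
move=> [b1 _]; rewrite /teval big_map mulr_sumr; apply: eq_bigr => p _ /=.
have b0 : beta 0 p.2 = 0 := linF0 (f := beta^~ p.2) (fun c x y => b1 c x y p.2).
by have := b1 c p.1 0 p.2; rewrite addr0 b0 addr0.
Qed.

Variables (XA : A -> Prop) (XB : B -> Prop).
Hypothesis hXA : generates XA.
Hypothesis hXB : generates XB.
Hypothesis hDXA : coprod_in_span DA XA.

Lemma rep_span a : span_of XA a -> exists s : seq (A * A),
  (forall p, p \in s -> span_of XA p.1 /\ span_of XA p.2) /\ teq (DA a) s.
Proof.
elim=> [|x Xx|x y _ [sx [hx ex]] _ [sy [hy ey]]|c x _ [sx [hx ex]]].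
- exists [::]; split=> // beta bb.
  have := DAlin (-1) 0 0 bb; rewrite scaler0 addr0 teval_cat teval_map //.
  rewrite mulN1r addrC subrr => ->; by rewrite /teval big_nil.
- exact: hDXA.
- exists (sx ++ sy); split.
    by move=> p; rewrite mem_cat => /orP[/hx|/hy].
  move=> beta bb; have := DAlin 1 x y bb; rewrite scale1r => ->.
  by rewrite !teval_cat teval_map // mul1r ex // ey.
- exists [seq (c *: p.1, p.2) | p <- sx]; split.
    by move=> p /mapP[u /hx [h1 h2] ->]; split=> //; apply: spanZ.
  move=> beta bb; have := DAlin c x 0 bb; rewrite addr0 => ->.
  rewrite teval_cat !teval_map // ex //.
  suff -> : teval beta (DA 0) = 0 by rewrite addr0.
  have := DAlin (-1) 0 0 bb; rewrite scaler0 addr0 teval_cat teval_map //.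
  by rewrite mulN1r addrC subrr.
Qed.

Local Notation IX := (in_ideal_gen (fun w => exists a b, [/\ XA a, XB b & w = H a b])).

Lemma step1 y : XB y -> forall a, span_of XA a -> IX (H a y).
Proof.
move=> Xy a; elim=> [|x Xx|x z _ Ix _ Iz|c x _ Ix].
- rewrite H_0b; exact: ideal0.
- by apply: idealS; exists x, y.
- by rewrite H_DA; apply: idealD.
- by rewrite H_ZA; apply: idealZ.
Qed.

Lemma step2 b : forall a, span_of XA a -> IX (H a b).
Proof.
elim: (hXB b) => [y Xy| |x y _ Ix _ Iy|c x _ Ix|x y _ Ix _ Iy] a sa.
- exact: step1.
- rewrite H_a1; exact: ideal0.
- by rewrite H_DB; apply: idealD; [apply: Ix|apply: Iy].
- by rewrite H_ZB; apply: idealZ; apply: Ix.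
have [s [hs es]] := rep_span sa.
pose Phi := fun u v => \sum_(q <- DB x) psi u q.1 *: (iB q.2 * H v y)
  + \sum_(q' <- DB y) psi v q'.2 *: (H u x * iB q'.1).
have hPhi : bilM Phi.
  have lx : linM (fun u => H u x) by move=> c u v; apply: H_linA.
  have ly : linM (fun u => H u y) by move=> c u v; apply: H_linA.
  split=> z; apply: linM_add; apply: linM_sumf => q.
  - exact: linM_scalF (psiLl _).
  - exact: linM_scalc (linM_mulr _ lx).
  - exact: linM_scalc (linM_mull _ ly).
  - exact: linM_scalF (psiLl _).
have -> : H a (x * y) = \sum_(p <- DA a) Phi p.1 p.2 by rewrite H_mulB -big_split.
rewrite (teq_tr hPhi es); apply: ideal_sum => p /hs [s1 s2].
apply: idealD; apply: ideal_sum => q _; apply: idealZ.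
  by apply: idealMl; apply: Iy.
by apply: idealMr; apply: Ix.
Qed.

Lemma step3 a : forall b, IX (H a b).
Proof.
elim: (hXA a) => [x Xx| |x y _ Ix _ Iy|c x _ Ix|x y _ Ix _ Iy] b.
- by apply: step2; apply: spanX.
- rewrite H_1b; exact: ideal0.
- by rewrite H_DA; apply: idealD.
- by rewrite H_ZA; apply: idealZ.
rewrite H_mulA; apply: idealD; apply: ideal_sum => p _; apply: ideal_sum => r _; apply: idealZ.
  by apply: idealMr.
by apply: idealMl.
Qed.

Lemma main_equiv z :
    in_ideal_gen (fun w => exists a b, w = H a b) z <-> IX z.
Proof.
split.
  move=> [l [hl ->]]; apply: ideal_sum => t /hl [a [b ->]].
  by apply: idealMr; apply: idealMl; apply: step3.
move=> [l [hl ->]]; exists l; split=> // t /hl [a [b [_ _ e]]].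
by exists a, b.
Qed.

End Main.

End Helpers.

Theorem lemma2p1p1 (F : fieldType) (A B : algType F)
  (DA : A -> seq (A * A)) (epsA : A -> F) (sigmaA : A -> A)
  (DB : B -> seq (B * B)) (epsB : B -> F) (sigmaB sigmaBinv : B -> B)
  (hA : is_hopf DA epsA sigmaA) (hB : is_hopf DB epsB sigmaB)
  (hinv1 : cancel sigmaB sigmaBinv) (hinv2 : cancel sigmaBinv sigmaB)
  (psi : A -> B -> F)
  (hpsi : skew_hopf_pairing DA epsA sigmaA DB epsB sigmaBinv psi)
  (P : algType F) (iA : A -> P) (iB : B -> P) (hP : is_free_product iA iB)
  (XA : A -> Prop) (XB : B -> Prop)
  (hXA : generates XA) (hXB : generates XB)
  (hDXA : coprod_in_span DA XA) (hDXB : coprod_in_span DB XB) :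
  forall z : P,
    in_ideal_gen (fun w => exists a b, w = hab iA iB DA DB psi a b) z <->
    in_ideal_gen (fun w => exists a b, [/\ XA a, XB b & w = hab iA iB DA DB psi a b]) z.
Proof.
case: hA => DAlin [DA1 DAmul] DAco [_ epsAc] _.
case: hB => DBlin [DB1 DBmul] DBco [_ epsBc] _.
case: hpsi => [[psiL psiR]] [psi1b psia1] HP2 HP3 _.
case: hP => [[iAl iAm iA1]] [[iBl iBm iB1]] _.
exact: (Helpers.main_equiv DAlin DA1 DAmul DAco epsAc DBlin DB1 DBmul DBco epsBc
  psiL psiR psi1b psia1 HP2 HP3 iAl iAm iA1 iBl iBm iB1 hXA hXB hDXA).
Qed.
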